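(* Let $\mathbb{I}>0$, $\xi>0$, $0<c\le1$, and for $\ell>0$ let $g_{c,\xi}(\ell)=4c\ell^2\int_0^\infty u^2\,\Phi\big(-\frac{u\ell\xi\sqrt{c\mathbb{I}}}{2}\big)\phi(u)\,du$. Then $g_{c,\xi}$ is maximized at $\ell_{opt}=\frac{2.426}{\xi\sqrt{c\,\mathbb{I}}}$ (constant to three decimals), and $$\alpha_{opt}=4\int_0^\infty\Phi\Big(-\frac{u\ell_{opt}\xi\sqrt{c\,\mathbb{I}}}{2}\Big)\phi(u)\,du=0.439$$ up to three decimal places.
   Context: $\Phi,\phi$ are the standard normal cdf and density; $g_{c,\xi}$ is the diffusion speed of the limiting diffusion of additive TMCMC-within-Gibbs for independent non-identically scaled product targets and $\alpha_{opt}$ the corresponding optimal acceptance rate. *)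

(* Defs.v *)
From Stdlib Require Import Reals.
From Coquelicot Require Import Coquelicot.
Open Scope R_scope.

Definition std_normal_pdf (u : R) : R := exp (- (u ^ 2) / 2) / sqrt (2 * PI).

Definition std_normal_cdf (x : R) : R :=
  RInt_gen std_normal_pdf (Rbar_locally m_infty) (at_point x).

Definition int_0_infty (f : R -> R) : R :=
  RInt_gen f (at_point 0) (Rbar_locally p_infty).

Definition g_speed (I c xi l : R) : R :=
  4 * c * l ^ 2 *
  int_0_infty (fun u => u ^ 2 * std_normal_cdf (- (u * l * xi * sqrt (c * I)) / 2)
                               * std_normal_pdf u).

Definition accept_rate (I c xi l : R) : R :=
  4 * int_0_infty (fun u => std_normal_cdf (- (u * l * xi * sqrt (c * I)) / 2)
                            * std_normal_pdf u).

(* Main.v *)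
Require Import Defs.
From Stdlib Require Import Reals Lra.
From Coquelicot Require Import Coquelicot.
Open Scope R_scope.

Lemma deriv0_const (f : R -> R) :
  (forall x, is_derive f x 0) -> forall x y, f x = f y.
Proof.
  intros H x y.
  assert (K : forall a b, a < b -> f a = f b).
  { intros a b Hab.
    destruct (MVT_cor2 f (fun _ => 0) a b Hab) as [c [Hc _]].
    - intros c _. apply is_derive_Reals. apply H.
    - lra. }
  destruct (Rtotal_order x y) as [h|[h|h]].
  - now apply K.
  - now subst.
  - symmetry; now apply K.
Qed.

Lemma sqrt2PI_pos : 0 < sqrt (2 * PI).
Proof. apply sqrt_lt_R0. generalize PI_RGT_0; lra. Qed.

Lemma phi_derive x : is_derive std_normal_pdf x
  (- x * std_normal_pdf x).
Proof.
  unfold std_normal_pdf.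
  auto_derive.
  - auto.
  - unfold Rdiv; simpl. field. generalize sqrt2PI_pos; lra.
Qed.

Lemma phi_cont x : continuous std_normal_pdf x.
Proof. apply (@ex_derive_continuous R_AbsRing R_NormedModule). eexists. apply phi_derive. Qed.

Lemma phi_even x : std_normal_pdf (- x) = std_normal_pdf x.
Proof. unfold std_normal_pdf. f_equal. f_equal. f_equal. ring. Qed.

Lemma phi_pos x : 0 < std_normal_pdf x.
Proof. unfold std_normal_pdf. apply Rdiv_lt_0_compat. apply exp_pos. apply sqrt2PI_pos. Qed.

Lemma ex_RInt_phi a b : ex_RInt std_normal_pdf a b.
Proof. apply (@ex_RInt_continuous R_CompleteNormedModule). intros; apply phi_cont. Qed.

Definition E x := RInt std_normal_pdf 0 x.

Lemma E_derive x : is_derive E x (std_normal_pdf x).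
Proof.
  apply is_derive_RInt with 0.
  - apply filter_forall. intros b. apply RInt_correct, ex_RInt_phi.
  - apply phi_cont.
Qed.

Lemma E0 : E 0 = 0.
Proof. unfold E. apply (@RInt_point R_CompleteNormedModule). Qed.

Lemma E_odd x : E (- x) = - E x.
Proof.
  assert (H : forall y, E (- y) + E y = E (- 0) + E 0).
  { intros y0. apply deriv0_const with (f := fun y => E (- y) + E y).
    intros y.
    evar (l : R).
    replace 0 with l.
    - apply @is_derive_plus.
      + apply is_derive_comp. apply E_derive. auto_derive; auto. 
      + apply E_derive.
    - unfold l. rewrite phi_even. unfold plus, scal; simpl; unfold mult; simpl; ring. }
  specialize (H x). rewrite Ropp_0, E0 in H. lra.
Qed.

Ltac req := match goal with |- ?a = ?b => change (@eq R a b) end.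

Definition fT (u x : R) := exp (- (u ^ 2 * (1 + x ^ 2)) / 2) / (1 + x ^ 2).
Definition dfT (u x : R) := - (u * exp (- (u ^ 2 * (1 + x ^ 2)) / 2)).

Lemma onepx2 x : 0 < 1 + x ^ 2.
Proof. nra. Qed.

Lemma fT_derive u x : is_derive (fun z => fT z x) u (dfT u x).
Proof.
  unfold fT, dfT. auto_derive.
  - generalize (onepx2 x); simpl; lra.
  - unfold Rdiv; simpl. field. generalize (onepx2 x); simpl; lra.
Qed.

Lemma cont_exp x : continuity_pt exp x.
Proof. apply derivable_continuous_pt, derivable_pt_exp. Qed.

Lemma dfT_cont u x : continuity_2d_pt dfT u x.
Proof.
  apply continuity_2d_pt_ext with
    (f := fun u v => - (u * exp (- (u * u * (1 + v * v)) * / 2))).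
  { intros; unfold dfT; simpl. unfold Rdiv. repeat f_equal; ring. }
  apply continuity_2d_pt_opp, continuity_2d_pt_mult.
  - apply continuity_2d_pt_id1.
  - apply continuity_1d_2d_pt_comp with (f := exp). apply cont_exp.
    apply continuity_2d_pt_mult.
    + apply continuity_2d_pt_opp, continuity_2d_pt_mult.
      * apply continuity_2d_pt_mult; apply continuity_2d_pt_id1.
      * apply continuity_2d_pt_plus. apply continuity_2d_pt_const.
        apply continuity_2d_pt_mult; apply continuity_2d_pt_id2.
    + apply continuity_2d_pt_const.
Qed.

Lemma fT_cont u x : continuous (fT u) x.
Proof.
  apply (@ex_derive_continuous R_AbsRing R_NormedModule).
  unfold fT. auto_derive. generalize (onepx2 x); simpl; lra.
Qed.

Lemma ex_RInt_fT u a b : ex_RInt (fT u) a b.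
Proof. apply (@ex_RInt_continuous R_CompleteNormedModule). intros; apply fT_cont. Qed.

Definition T (u a : R) := / (2 * PI) * RInt (fT u) 0 a.

Lemma sqrt2PI_sq : sqrt (2 * PI) * sqrt (2 * PI) = 2 * PI.
Proof. apply sqrt_sqrt. generalize PI_RGT_0; lra. Qed.

Lemma RInt_dfT u a :
  RInt (fun x => dfT u x) 0 a =
  - (exp (- (u ^ 2) / 2) * sqrt (2 * PI)) * E (u * a).
Proof.
  transitivity (RInt (fun x => scal (- (exp (- (u ^ 2) / 2) * sqrt (2 * PI)))
                   (scal u (std_normal_pdf (u * x + 0)))) 0 a).
  { apply RInt_ext. intros x _. unfold dfT, std_normal_pdf.
    rewrite (Rplus_0_r (u*x)).
    replace (- (u ^ 2 * (1 + x ^ 2)) / 2) with (- (u ^ 2) / 2 + - ((u * x) ^ 2) / 2) by field.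
    rewrite exp_plus. unfold scal; simpl; unfold mult; simpl. field. generalize sqrt2PI_pos; lra. }
  rewrite (@RInt_scal R_CompleteNormedModule).
  2:{ apply (@ex_RInt_comp_lin R_CompleteNormedModule). apply ex_RInt_phi. }
  rewrite (@RInt_comp_lin R_CompleteNormedModule). 2: apply ex_RInt_phi.
  unfold scal; simpl; unfold mult; simpl. unfold E. f_equal. f_equal; ring.
Qed.

Lemma T_derive u a : is_derive (fun u => T u a) u (- std_normal_pdf u * E (a * u)).
Proof.
  unfold T.
  assert (H := is_derive_RInt_param fT 0 a u).
  replace (- std_normal_pdf u * E (a * u)) with (/ (2 * PI) * RInt (fun t => Derive (fun u => fT u t) u) 0 a).
  - apply is_derive_scal. apply H.
    + apply filter_forall. intros y t _. eexists. apply fT_derive.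
    + intros t _. apply continuity_2d_pt_ext with (f := dfT).
      * intros; symmetry; apply is_derive_unique, fT_derive.
      * apply dfT_cont.
    + apply filter_forall. intros y. apply ex_RInt_fT.
  - 
    rewrite (RInt_ext _ (fun x => dfT u x)).
    2:{ intros; apply is_derive_unique, fT_derive. }
    rewrite RInt_dfT. unfold std_normal_pdf.
    rewrite (Rmult_comm u a).
    field_simplify_eq.
    2:{ split. generalize sqrt2PI_pos; lra. generalize PI_RGT_0; lra. }
    rewrite <- (Rsqr_pow2 (sqrt (2*PI))), Rsqr_sqrt. ring. generalize PI_RGT_0; lra.
Qed.

Lemma T0 a : T 0 a = atan a / (2 * PI).
Proof.
  unfold T.
  rewrite (RInt_ext _ (fun x => / (1 + x ^ 2))).
  2:{ intros x _. unfold fT. replace (- (0 ^ 2 * (1 + x ^ 2)) / 2) with 0 by (simpl; field).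
      rewrite exp_0. match goal with |- ?a = ?b => change (@eq R a b) end. field. generalize (onepx2 x); lra. }
  rewrite (is_RInt_unique _ 0 a (minus (atan a) (atan 0))).
  - unfold minus, plus, opp; simpl. rewrite atan_0. field. generalize PI_RGT_0; lra.
  - apply (@is_RInt_derive R_CompleteNormedModule).
    + intros x _. apply is_derive_Reals, derivable_pt_lim_atan.
    + intros x _. apply (@ex_derive_continuous R_AbsRing R_NormedModule).
      auto_derive. generalize (onepx2 x); simpl; lra.
Qed.

Lemma T_bound u a : 0 <= a -> 0 <= T u a <= a / (2 * PI) * exp (- (u ^ 2) / 2).
Proof.
  intros Ha. unfold T.
  assert (HP : 0 < 2 * PI) by (generalize PI_RGT_0; lra).
  assert (B : forall x, 0 <= fT u x <= exp (- (u ^ 2) / 2)).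
  { intros x. unfold fT. generalize (onepx2 x); intros H1.
    split.
    - apply Rlt_le, Rdiv_lt_0_compat. apply exp_pos. lra.
    - apply Rle_trans with (exp (- (u ^ 2 * (1 + x ^ 2)) / 2)).
      + apply Rle_trans with (exp (- (u ^ 2 * (1 + x ^ 2)) / 2) / 1).
        * apply Rmult_le_compat_l. apply Rlt_le, exp_pos.
          apply Rinv_le_contravar; nra.
        * lra.
      + apply exp_le_3 || (destruct (Req_dec (- (u ^ 2 * (1 + x ^ 2)) / 2) (- (u ^ 2) / 2)) as [e|e];
          [rewrite e; lra| apply Rlt_le, exp_increasing; nra]). }
  split.
  - apply Rmult_le_pos. apply Rlt_le, Rinv_0_lt_compat; lra.
    apply RInt_ge_0; auto. apply ex_RInt_fT. intros; apply B.
  - apply Rle_trans with (/ (2 * PI) * (a * exp (- (u ^ 2) / 2))).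
    + apply Rmult_le_compat_l. apply Rlt_le, Rinv_0_lt_compat; lra.
      generalize (abs_RInt_le_const (fT u) 0 a (exp (- (u ^ 2) / 2)) Ha (ex_RInt_fT u 0 a)).
      intros H. 
      assert (H2: Rabs (RInt (fT u) 0 a) <= (a - 0) * exp (- (u ^ 2) / 2)).
      { apply H. intros t _. rewrite Rabs_pos_eq; apply B. }
      apply Rabs_le_between in H2. lra.
    + right. field. lra.
Qed.

Lemma lim_pinf_bound (f : R -> R) (L C : R) :
  0 <= C -> (forall u, 1 <= u -> Rabs (f u - L) <= C / u) ->
  filterlim f (Rbar_locally p_infty) (locally L).
Proof.
  intros HC H. apply filterlim_locally. intros eps.
  exists (Rmax 1 (C / eps)). intros x Hx.
  assert (H1 : 1 < x) by (generalize (Rmax_l 1 (C/eps)); lra).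
  assert (H2 : C / eps < x) by (generalize (Rmax_r 1 (C/eps)); lra).
  assert (Hep := cond_pos eps).
  change (Rabs (f x - L) < eps).
  apply Rle_lt_trans with (C / x). apply H; lra.
  apply Rmult_lt_reg_r with x. lra.
  unfold Rdiv. rewrite Rmult_assoc, Rinv_l by lra.
  apply Rmult_lt_reg_r with (/ eps). apply Rinv_0_lt_compat; lra.
  replace (eps * x * / eps) with x by (field; lra). lra.
Qed.

Lemma lim_minf_bound (f : R -> R) (L C : R) :
  0 <= C -> (forall u, 1 <= u -> Rabs (f (- u) - L) <= C / u) ->
  filterlim f (Rbar_locally m_infty) (locally L).
Proof.
  intros HC H.
  assert (K := lim_pinf_bound (fun u => f (- u)) L C HC H).
  apply filterlim_locally. intros eps.
  apply filterlim_locally with (eps := eps) in K.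
  destruct K as [M HM]. exists (- M). intros x Hx.
  replace x with (- - x) by ring. apply HM. lra.
Qed.

Lemma exp_sq_ge y : 0 <= y -> (1 + y / 2) ^ 2 <= exp y.
Proof.
  intros Hy. replace y with (y / 2 + y / 2) at 2 by field.
  rewrite exp_plus. generalize (exp_ineq1_le (y / 2)). intros H. simpl. nra.
Qed.

Lemma exp_bound1 u : 0 < u -> exp (- (u ^ 2) / 2) <= 1 / u.
Proof.
  intros Hu. 
  assert (H := exp_ineq1_le (u ^ 2 / 2)).
  replace (- (u ^ 2) / 2) with (- (u ^ 2 / 2)) by field.
  rewrite exp_Ropp.
  assert (0 < exp (u ^ 2 / 2)) by apply exp_pos.
  apply Rmult_le_reg_r with (exp (u ^ 2 / 2) * u). nra.
  field_simplify; try lra. nra.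
Qed.

Lemma exp_bound2 u : 0 < u -> u * exp (- (u ^ 2) / 2) <= 2 / u.
Proof.
  intros Hu.
  assert (H := exp_sq_ge (u ^ 2 / 2)).
  replace (- (u ^ 2) / 2) with (- (u ^ 2 / 2)) by field.
  rewrite exp_Ropp.
  assert (0 < exp (u ^ 2 / 2)) by apply exp_pos.
  assert (0 <= u ^ 2 / 2) by nra.
  specialize (H H1).
  apply Rmult_le_reg_r with (exp (u ^ 2 / 2) * u). nra.
  field_simplify; try lra. nra.
Qed.

Lemma E_sq u : E u ^ 2 = 1 / 4 - 2 * T u 1.
Proof.
  assert (H : T u 1 + E u ^ 2 / 2 = T 0 1 + E 0 ^ 2 / 2).
  { apply deriv0_const with (f := fun u => T u 1 + E u ^ 2 / 2).
    intros y.
    replace 0 with (plus (- std_normal_pdf y * E (1 * y)) (E y * std_normal_pdf y)).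
    - apply @is_derive_plus.
      + apply T_derive.
      + apply is_derive_ext with (f := fun z => / 2 * (E z * E z)).
        { intros; simpl; field. }
        replace (E y * std_normal_pdf y) with (/ 2 * (plus (mult (std_normal_pdf y) (E y)) (mult (E y) (std_normal_pdf y)))).
        * apply is_derive_scal. apply @is_derive_mult; try apply E_derive.
          intros; apply Rmult_comm.
        * unfold plus, mult; simpl. field.
    - unfold plus; simpl. rewrite Rmult_1_l. ring. }
  rewrite T0, E0, atan_1 in H.
  assert (0 < PI) by apply PI_RGT_0.
  replace (PI / 4 / (2 * PI)) with (1 / 8) in H by (field; lra).
  lra.
Qed.

Lemma E_nonneg u : 0 <= u -> 0 <= E u.
Proof.
  intros Hu. unfold E. apply RInt_ge_0; auto. apply ex_RInt_phi.
  intros; apply Rlt_le, phi_pos.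
Qed.

Lemma E_near u : 0 <= u -> Rabs (E u - 1 / 2) <= exp (- (u ^ 2) / 2).
Proof.
  intros Hu.
  assert (H1 := E_sq u). assert (H2 := T_bound u 1 ltac:(lra)).
  assert (H3 := E_nonneg u Hu).
  assert (HP : 3 < PI) by (generalize PI2_3_2; lra).
  assert (Hx := exp_pos (- (u ^ 2) / 2)).
  assert (H4 : 1 / (2 * PI) * exp (- (u ^ 2) / 2) <= / 6 * exp (- (u ^ 2) / 2)).
  { apply Rmult_le_compat_r. lra. unfold Rdiv. rewrite Rmult_1_l.
    apply Rinv_le_contravar; lra. }
  assert (H5 : (E u - 1/2) * (E u + 1/2) = - 2 * T u 1) by nra.
  rewrite Rabs_left1.
  - nra.
  - nra.
Qed.

Lemma E_lim_p : filterlim E (Rbar_locally p_infty) (locally (1 / 2)).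
Proof.
  apply lim_pinf_bound with 1. lra.
  intros u Hu. eapply Rle_trans. apply E_near. lra. apply exp_bound1. lra.
Qed.

Lemma E_lim_m : filterlim E (Rbar_locally m_infty) (locally (- (1 / 2))).
Proof.
  apply lim_minf_bound with 1. lra.
  intros u Hu. rewrite E_odd. replace (- E u - - (1 / 2)) with (- (E u - 1 / 2)) by ring.
  rewrite Rabs_Ropp.
  eapply Rle_trans. apply E_near. lra. apply exp_bound1. lra.
Qed.

Lemma gen_int (F f : R -> R) (Fa Fb : (R -> Prop) -> Prop)
  {FFa : Filter Fa} {FFb : Filter Fb} (la lb : R) :
  (forall x, is_derive F x (f x)) -> (forall x, continuous f x) ->
  filterlim F Fa (locally la) -> filterlim F Fb (locally lb) ->
  is_RInt_gen f Fa Fb (lb - la).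
Proof.
  intros HD HC Ha Hb.
  apply (is_RInt_gen_ext (Derive F)).
  - apply filter_forall. intros ab x _. apply is_derive_unique, HD.
  - apply (is_RInt_gen_Derive F); auto.
    + apply filter_forall. intros ab x _. eexists; apply HD.
    + apply filter_forall. intros ab x _.
      apply (continuous_ext (T:=R_UniformSpace) (U:=R_UniformSpace) f). intros; symmetry; apply is_derive_unique, HD.
      apply HC.
Qed.

Lemma lim_at_point (F : R -> R) x : filterlim F (at_point x) (locally (F x)).
Proof.
  intros P HP. unfold filtermap, at_point. now apply locally_singleton.
Qed.

Lemma cdf_E x : std_normal_cdf x = 1 / 2 + E x.
Proof.
  unfold std_normal_cdf.
  apply is_RInt_gen_unique.
  replace (1 / 2 + E x) with (E x - - (1 / 2)) by ring.
  apply (gen_int E std_normal_pdf (Rbar_locally m_infty) (at_point x)).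
  - apply E_derive.
  - apply phi_cont.
  - apply E_lim_m.
  - apply lim_at_point.
Qed.

Lemma Ea_derive a u : is_derive (fun u => E (a * u)) u (a * std_normal_pdf (a * u)).
Proof.
  apply (is_derive_comp E (fun u => a * u) u (std_normal_pdf (a * u)) a).
  apply E_derive. auto_derive; auto. ring.
Qed.

Lemma E_le_half u : 0 <= u -> E u <= 1 / 2.
Proof. intros Hu. assert (H1 := E_sq u). assert (H2 := T_bound u 1 ltac:(lra)).
  assert (H3 := E_nonneg u Hu). nra. Qed.

Definition P1f a u := E u / 2 + T u a.

Lemma P1f_derive a u :
  is_derive (P1f a) u ((1 / 2 - E (a * u)) * std_normal_pdf u).
Proof.
  unfold P1f.
  replace ((1 / 2 - E (a * u)) * std_normal_pdf u)
    with (plus (std_normal_pdf u / 2) (- std_normal_pdf u * E (a * u))).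
  - apply @is_derive_plus.
    + apply is_derive_ext with (f := fun u => / 2 * E u). intros; req; unfold Rdiv; ring.
      replace (std_normal_pdf u / 2) with (/ 2 * std_normal_pdf u) by (unfold Rdiv; ring).
      apply is_derive_scal, E_derive.
    + apply T_derive.
  - unfold plus; simpl. field.
Qed.

Lemma P1f_near a u : 0 <= a -> 1 <= u -> Rabs (P1f a u - 1 / 4) <= (1 / 2 + a) / u.
Proof.
  intros Ha Hu. unfold P1f.
  assert (HP : 3 < PI) by (generalize PI2_3_2; lra).
  assert (H1 := E_near u ltac:(lra)). assert (H2 := T_bound u a Ha).
  assert (H3 := exp_bound1 u ltac:(lra)).
  assert (Hx := exp_pos (- (u ^ 2) / 2)).
  assert (H4 : a / (2 * PI) * exp (- (u ^ 2) / 2) <= a * exp (- (u ^ 2) / 2)).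
  { apply Rmult_le_compat_r. lra. unfold Rdiv. 
    rewrite <- (Rmult_1_r a) at 2. apply Rmult_le_compat_l. lra.
    rewrite <- Rinv_1. apply Rinv_le_contravar; lra. }
  replace (E u / 2 + T u a - 1 / 4) with ((E u - 1/2) / 2 + T u a) by field.
  eapply Rle_trans. apply Rabs_triang.
  unfold Rdiv at 1. rewrite Rabs_mult, (Rabs_pos_eq (/ 2)) by lra.
  rewrite (Rabs_pos_eq (T u a)) by lra.
  assert (a * exp (- (u ^ 2) / 2) <= a * (1 / u)) by (apply Rmult_le_compat_l; lra).
  replace ((1 / 2 + a) / u) with (1 / 2 * (1 / u) + a * (1 / u)) by (field; lra).
  lra.
Qed.

Lemma P1f_lim a : 0 <= a ->
  filterlim (P1f a) (Rbar_locally p_infty) (locally (1 / 4)).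
Proof.
  intros Ha. apply lim_pinf_bound with (1 / 2 + a). lra.
  intros u Hu. now apply P1f_near.
Qed.

Lemma cont_of_derive (F f : R -> R) x : (forall y, is_derive F y (f y)) -> continuous F x.
Proof. intros H. apply (@ex_derive_continuous R_AbsRing R_NormedModule). eexists; apply H. Qed.

Lemma cont_integrand1 a x : continuous (fun u => (1 / 2 - E (a * u)) * std_normal_pdf u) x.
Proof.
  apply (@ex_derive_continuous R_AbsRing R_NormedModule).
  eexists. apply @is_derive_mult.
  - apply @is_derive_minus. apply is_derive_const. apply Ea_derive.
  - apply phi_derive.
  - intros; apply Rmult_comm.
Qed.

Lemma int1 a (f : R -> R) : 0 < a ->
  (forall u, f u = std_normal_cdf (- (a * u)) * std_normal_pdf u) ->
  int_0_infty f = 1 / 4 - atan a / (2 * PI).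
Proof.
  intros Ha Hf. unfold int_0_infty.
  apply is_RInt_gen_unique.
  apply (is_RInt_gen_ext (fun u => (1 / 2 - E (a * u)) * std_normal_pdf u)).
  { apply filter_forall. intros ab x _. rewrite Hf, cdf_E, E_odd. req; ring. }
  replace (1 / 4 - atan a / (2 * PI)) with (1 / 4 - P1f a 0).
  2:{ unfold P1f. rewrite E0, T0. field. generalize PI_RGT_0; lra. }
  apply (gen_int (P1f a) _ (at_point 0) (Rbar_locally p_infty)).
  - apply P1f_derive.
  - apply cont_integrand1.
  - apply lim_at_point.
  - apply P1f_lim. lra.
Qed.

Lemma is_derive_eq (f : R -> R) x l1 l2 : is_derive f x l1 -> l1 = l2 -> is_derive f x l2.
Proof. intros H e; now rewrite <- e. Qed.

Definition P2f a u := - (u * std_normal_pdf u * (1 / 2 - E (a * u))) + P1f a u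
   + a / (2 * PI * (1 + a ^ 2)) * exp (- ((1 + a ^ 2) * u ^ 2) / 2).

Lemma phi_prod a u : std_normal_pdf u * std_normal_pdf (a * u)
  = exp (- ((1 + a ^ 2) * u ^ 2) / 2) / (2 * PI).
Proof.
  unfold std_normal_pdf.
  replace (- ((1 + a ^ 2) * u ^ 2) / 2) with (- u ^ 2 / 2 + - (a * u) ^ 2 / 2) by field.
  rewrite exp_plus. rewrite <- sqrt2PI_sq at 3. field. generalize sqrt2PI_pos; lra.
Qed.

Lemma P2f_derive a u :
  is_derive (P2f a) u (u ^ 2 * (1 / 2 - E (a * u)) * std_normal_pdf u).
Proof.
  unfold P2f.
  eapply is_derive_eq.
  { apply @is_derive_plus. apply @is_derive_plus.
    - apply @is_derive_opp. apply @is_derive_mult. apply @is_derive_mult.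
      + apply @is_derive_id.
      + apply phi_derive.
      + intros; apply Rmult_comm.
      + apply @is_derive_minus. apply @is_derive_const. apply Ea_derive.
      + intros; apply Rmult_comm.
    - apply P1f_derive.
    - apply is_derive_scal. 
      apply (is_derive_comp exp (fun u => - ((1 + a ^ 2) * u ^ 2) / 2)).
      + apply is_derive_Reals, derivable_pt_lim_exp.
      + auto_derive; auto. }
  assert (HP : 0 < PI) by apply PI_RGT_0.
  assert (Ha : 0 < 1 + a ^ 2) by apply onepx2.
  unfold plus, mult, opp, minus, scal, one, zero; simpl.
  unfold mult; simpl.
  assert (K := phi_prod a u).
  assert (K' : exp (- ((1 + a * (a * 1)) * (u * (u * 1))) / 2) = 2 * PI * (std_normal_pdf u * std_normal_pdf (a * u))).
  { rewrite K. simpl. field. lra. }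
  rewrite K'. unfold plus, opp; simpl. field. simpl in Ha; lra.
Qed.

Lemma P2f_lim a : 0 < a ->
  filterlim (P2f a) (Rbar_locally p_infty) (locally (1 / 4)).
Proof.
  intros Ha. apply lim_pinf_bound with (1 + (1 / 2 + a) + a). lra.
  intros u Hu.
  assert (HP : 3 < PI) by (generalize PI2_3_2; lra).
  assert (N1 := P1f_near a u ltac:(lra) Hu).
  assert (B1 := exp_bound1 u ltac:(lra)).
  assert (B2 := exp_bound2 u ltac:(lra)).
  assert (Hx := exp_pos (- (u ^ 2) / 2)).
  assert (E1 := E_nonneg (a * u) ltac:(nra)).
  assert (E2 := E_le_half (a * u) ltac:(nra)).
  assert (Hs : 1 < sqrt (2 * PI)).
  { rewrite <- sqrt_1. apply sqrt_lt_1; lra. }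
  assert (Q1 : 0 <= u * std_normal_pdf u <= 2 / u).
  { unfold std_normal_pdf. split.
    - apply Rmult_le_pos. lra. apply Rlt_le, Rdiv_lt_0_compat; lra.
    - apply Rle_trans with (u * exp (- (u ^ 2) / 2)); auto.
      apply Rmult_le_compat_l. lra. unfold Rdiv.
      rewrite <- (Rmult_1_r (exp _)) at 2. apply Rmult_le_compat_l. lra.
      rewrite <- Rinv_1. apply Rinv_le_contravar; lra. }
  assert (Ha2 : 0 < 1 + a ^ 2) by apply onepx2.
  assert (Q2 : 0 <= a / (2 * PI * (1 + a ^ 2)) * exp (- ((1 + a ^ 2) * u ^ 2) / 2) <= a / u).
  { assert (X := exp_pos (- ((1 + a ^ 2) * u ^ 2) / 2)). split.
    - apply Rmult_le_pos; [apply Rlt_le, Rdiv_lt_0_compat|]; nra.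
    - apply Rle_trans with (a * exp (- (u ^ 2) / 2)).
      + apply Rmult_le_compat. apply Rlt_le, Rdiv_lt_0_compat; nra. lra.
        unfold Rdiv. apply Rle_trans with (a * 1). apply Rmult_le_compat_l. lra.
        rewrite <- Rinv_1. apply Rinv_le_contravar. lra. nra. lra.
        destruct (Req_dec (- ((1 + a ^ 2) * u ^ 2) / 2) (- (u ^ 2) / 2)) as [e|e].
        rewrite e; lra. apply Rlt_le, exp_increasing. nra.
      + replace (a / u) with (a * (1 / u)) by (field; lra). apply Rmult_le_compat_l; lra. }
  unfold P2f.
  set (A := u * std_normal_pdf u) in *.
  set (B := a / (2 * PI * (1 + a ^ 2)) * exp (- ((1 + a ^ 2) * u ^ 2) / 2)) in *.
  assert (Hb : A * (1 / 2 - E (a * u)) <= 1 / u).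
  { apply Rle_trans with (A * (1/2)). apply Rmult_le_compat_l; lra.
    apply Rle_trans with (2 / u * (1/2)). nra. right; field; lra. }
  assert (0 <= A * (1 / 2 - E (a * u))) by nra.
  apply Rabs_le_between in N1. apply Rabs_le_between.
  replace ((1 + (1 / 2 + a) + a) / u) with (1 / u + (1 / 2 + a) / u + a / u) by (field; lra).
  split; lra.
Qed.

Lemma cont_integrand2 a x : continuous (fun u => u ^ 2 * (1 / 2 - E (a * u)) * std_normal_pdf u) x.
Proof.
  apply (@ex_derive_continuous R_AbsRing R_NormedModule).
  eexists. apply @is_derive_mult. apply @is_derive_mult.
  - apply @is_derive_pow. apply @is_derive_id.
  - apply @is_derive_minus. apply is_derive_const. apply Ea_derive.
  - intros; apply Rmult_comm.
  - apply phi_derive.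
  - intros; apply Rmult_comm.
Qed.

Lemma int2 a (f : R -> R) : 0 < a ->
  (forall u, f u = u ^ 2 * std_normal_cdf (- (a * u)) * std_normal_pdf u) ->
  int_0_infty f = 1 / 4 - atan a / (2 * PI) - a / (2 * PI * (1 + a ^ 2)).
Proof.
  intros Ha Hf. unfold int_0_infty.
  apply is_RInt_gen_unique.
  apply (is_RInt_gen_ext (fun u => u ^ 2 * (1 / 2 - E (a * u)) * std_normal_pdf u)).
  { apply filter_forall. intros ab x _. rewrite Hf, cdf_E, E_odd. req; ring. }
  replace (1 / 4 - atan a / (2 * PI) - a / (2 * PI * (1 + a ^ 2))) with (1 / 4 - P2f a 0).
  2:{ unfold P2f, P1f. rewrite E0, T0. replace (- ((1 + a ^ 2) * 0 ^ 2) / 2) with 0 by (simpl; field).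
      rewrite exp_0. assert (0 < 1 + a ^ 2) by apply onepx2. field. generalize PI_RGT_0; lra. }
  apply (gen_int (P2f a) _ (at_point 0) (Rbar_locally p_infty)).
  - apply P2f_derive.
  - apply cont_integrand2.
  - apply lim_at_point.
  - apply P2f_lim. lra.
Qed.

Lemma atan_series_bound x N : 0 < x < 1 ->
  sum_f_R0 (tg_alt (Ratan_seq x)) (S (2 * N)) <= atan x <=
  sum_f_R0 (tg_alt (Ratan_seq x)) (2 * N).
Proof.
  intros Hx. rewrite atan_eq_ps_atan by lra. unfold ps_atan.
  destruct (in_int x) as [h|h]; [|lra].
  destruct (ps_atan_exists_1 x h) as [v Hv].
  apply alternated_series_ineq; auto.
  apply Ratan_seq_decreasing; lra.
  apply Ratan_seq_converging; lra.
Qed.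

Lemma atan_lo x N : 0 < x < 1 -> sum_f_R0 (tg_alt (Ratan_seq x)) (S (2 * N)) <= atan x.
Proof. intros; apply atan_series_bound; auto. Qed.
Lemma atan_hi x N : 0 < x < 1 -> atan x <= sum_f_R0 (tg_alt (Ratan_seq x)) (2 * N).
Proof. intros; apply atan_series_bound; auto. Qed.

Ltac atan_eval := unfold tg_alt, Ratan_seq; simpl sum_f_R0; simpl INR; simpl pow.

Lemma test : atan (1/5) <= 2/10.
Proof.
  eapply Rle_trans. apply (atan_hi _ 2); lra.
  atan_eval. lra.
Qed.

Definition kf (a : R) := PI / 2 - atan a - a / (1 + a ^ 2) - a / (1 + a ^ 2) ^ 2.
Definition Hf (a : R) := a ^ 2 * (1 / 4 - atan a / (2 * PI) - a / (2 * PI * (1 + a ^ 2))).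

Lemma opx2 x : 0 < 1 + x ^ 2.
Proof. nra. Qed.

Lemma atan_derive x : is_derive atan x (/ (1 + x ^ 2)).
Proof. apply is_derive_Reals, derivable_pt_lim_atan. Qed.

Lemma is_derive_eq' (f : R -> R) x l1 l2 : is_derive f x l1 -> l1 = l2 -> is_derive f x l2.
Proof. intros H e; now rewrite <- e. Qed.

Lemma kf_derive x : is_derive kf x (- (3 - x ^ 2) / (1 + x ^ 2) ^ 3).
Proof.
  assert (H1 := opx2 x).
  unfold kf.
  eapply is_derive_eq'.
  { apply @is_derive_minus. apply @is_derive_minus. apply @is_derive_minus.
    apply @is_derive_const. apply atan_derive.
    - auto_derive; try reflexivity. simpl in H1; lra.
    - auto_derive; try reflexivity. simpl in H1; nra. }
  unfold minus, plus, opp, zero; simpl. field. simpl in H1; lra.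
Qed.

Lemma Hf_derive x : is_derive Hf x (x / PI * kf x).
Proof.
  assert (H1 := opx2 x). assert (HP := PI_RGT_0).
  unfold Hf.
  eapply is_derive_eq'.
  { apply @is_derive_mult.
    - auto_derive; try reflexivity; auto.
    - apply @is_derive_minus. apply @is_derive_minus.
      apply @is_derive_const.
      + apply is_derive_ext with (f := fun x => / (2 * PI) * atan x).
        { intros; unfold Rdiv; match goal with |- ?a = ?b => change (@eq R a b) end; ring. }
        apply is_derive_scal, atan_derive.
      + auto_derive; try reflexivity. simpl in H1; nra.
    - intros; apply Rmult_comm. }
  unfold kf, minus, plus, opp, zero, mult; simpl. field. simpl in H1; lra.
Qed.

Lemma kf_cont x : continuity_pt kf x.
Proof.
  apply derivable_continuous_pt. exists (- (3 - x ^ 2) / (1 + x ^ 2) ^ 3).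
  apply is_derive_Reals, kf_derive.
Qed.

Lemma kf_decr a b : 0 < a -> a < b -> b <= 7 / 5 -> kf b < kf a.
Proof.
  intros Ha Hab Hb.
  destruct (MVT_cor2 kf (fun x => - (3 - x ^ 2) / (1 + x ^ 2) ^ 3) a b Hab) as [c [Hc Hc2]].
  - intros c _. apply is_derive_Reals, kf_derive.
  - assert (H1 := opx2 c).
    assert (- (3 - c ^ 2) / (1 + c ^ 2) ^ 3 < 0).
    { unfold Rdiv. apply Rmult_neg_pos. nra.
      apply Rinv_0_lt_compat. apply pow_lt; lra. }
    nra.
Qed.

Lemma kf_neg a : 7 / 5 <= a -> kf a < 0.
Proof.
  intros Ha.
  set (x := / a).
  assert (Hx : 0 < x <= 5 / 7).
  { unfold x. split. apply Rinv_0_lt_compat; lra.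
    replace (5/7) with (/ (7/5)) by field. apply Rinv_le_contravar; lra. }
  assert (Hxa : a = / x) by (unfold x; rewrite Rinv_inv; auto).
  assert (K : kf a = atan x - x / (1 + x ^ 2) - x ^ 3 / (1 + x ^ 2) ^ 2).
  { unfold kf. unfold x. rewrite atan_inv by lra. rewrite Hxa. rewrite Rinv_inv.
    field. split; [nra | lra]. }
  rewrite K.
  assert (A := atan_hi x 1 ltac:(lra)).
  revert A. atan_eval. intros A.
  assert (H1 := opx2 x).
  assert (P : x - x * x * x / 3 + x * x * x * x * x / 5 - x / (1 + x ^ 2) - x ^ 3 / (1 + x ^ 2) ^ 2 < 0).
  { replace (x - x * x * x / 3 + x * x * x * x * x / 5 - x / (1 + x ^ 2) - x ^ 3 / (1 + x ^ 2) ^ 2)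
      with (x * x ^ 2 * (-5 + 8 * x ^ 2 + (x ^ 2) ^ 2 + 3 * (x ^ 2) ^ 3) / (15 * (1 + x ^ 2) ^ 2)).
    2:{ field. simpl in H1; lra. }
    set (t := x ^ 2).
    assert (Ht : 0 < t <= 25 / 49) by (unfold t; nra).
    unfold Rdiv. apply Rmult_neg_pos.
    - assert (T2 : t * t <= 25 / 49 * t) by nra.
      assert (T3 : t * (t * t) <= 25 / 49 * (t * t)) by nra.
      assert (-5 + 8 * t + t ^ 2 + 3 * t ^ 3 < 0) by (simpl; nra).
      assert (0 < x * t) by nra. nra.
    - apply Rinv_0_lt_compat. nra. }
  assert (A' : atan x <= x - x * x * x / 3 + x * x * x * x * x / 5)
    by (eapply Rle_trans; [exact A| right; field]).
  simpl in P. lra.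
Qed.

Lemma atan_shift a : 0 < a -> atan a = PI / 4 + atan ((a - 1) / (1 + a)).
Proof.
  intros Ha.
  assert (B1 := atan_bound a). assert (B2 := atan_bound (atan_sub a 1)).
  assert (P0 : 0 < atan a). { rewrite <- atan_0. apply atan_increasing; lra. }
  assert (HP := PI_RGT_0).
  rewrite (atan_sub_correct a 1).
  - rewrite atan_1. unfold atan_sub. f_equal. f_equal. f_equal. ring.
  - lra.
  - rewrite atan_1. lra.
  - lra.
Qed.

Lemma kf_repr a : 0 < a -> kf a =
  4 * atan (/ 5) - atan (/ 239) - atan ((a - 1) / (1 + a)) - a / (1 + a ^ 2) - a / (1 + a ^ 2) ^ 2.
Proof.
  intros Ha. unfold kf. rewrite (atan_shift a Ha).
  rewrite <- Machin_4_5_239. field. generalize (opx2 a); simpl; lra.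
Qed.

Lemma a5 : 4 * atan (/ 5) <= 4 * (/5 - /5*/5*/5/3 + /5*/5*/5*/5*/5/5).
Proof.
  apply Rmult_le_compat_l. lra. eapply Rle_trans. apply (atan_hi _ 1); lra.
  atan_eval. right. field.
Qed.

Ltac atan_fact H := revert H; atan_eval; intro H.

Lemma kf_at_lo : 0 < kf (12131 / 10000).
Proof.
  rewrite kf_repr by lra.
  replace ((12131 / 10000 - 1) / (1 + 12131 / 10000)) with (2131 / 22131) by field.
  assert (A1 := atan_lo (/ 5) 2 ltac:(lra)).
  assert (A2 := atan_hi (/ 239) 1 ltac:(lra)).
  assert (A3 := atan_hi (2131 / 22131) 2 ltac:(lra)).
  atan_fact A1. atan_fact A2. atan_fact A3.
  simpl. lra.
Qed.

Lemma kf_at_hi : kf (4853 / 4000) < 0.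
Proof.
  rewrite kf_repr by lra.
  replace ((4853 / 4000 - 1) / (1 + 4853 / 4000)) with (853 / 8853) by field.
  assert (A1 := atan_hi (/ 5) 2 ltac:(lra)).
  assert (A2 := atan_lo (/ 239) 1 ltac:(lra)).
  assert (A3 := atan_lo (853 / 8853) 2 ltac:(lra)).
  atan_fact A1. atan_fact A2. atan_fact A3.
  simpl. lra.
Qed.

Lemma PI_bounds : 31415 / 10000 < PI < 31416 / 10000.
Proof.
  assert (M := Machin_4_5_239).
  assert (A1 := atan_hi (/ 5) 2 ltac:(lra)).
  assert (A2 := atan_lo (/ 239) 1 ltac:(lra)).
  assert (A3 := atan_lo (/ 5) 2 ltac:(lra)).
  assert (A4 := atan_hi (/ 239) 1 ltac:(lra)).
  atan_fact A1. atan_fact A2. atan_fact A3. atan_fact A4.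
  lra.
Qed.

Lemma acc_bound a : 12131 / 10000 <= a <= 4853 / 4000 ->
  Rabs (1 - 2 * atan a / PI - 439 / 1000) <= 5 / 10000.
Proof.
  intros Ha.
  assert (HP := PI_bounds).
  assert (L : atan (12131 / 10000) <= atan a).
  { destruct (Req_dec a (12131/10000)) as [e|e]. rewrite e; lra.
    apply Rlt_le, atan_increasing; lra. }
  assert (U : atan a <= atan (4853 / 4000)).
  { destruct (Req_dec a (4853/4000)) as [e|e]. rewrite e; lra.
    apply Rlt_le, atan_increasing; lra. }
  rewrite (atan_shift (12131/10000)) in L by lra. rewrite (atan_shift (4853/4000)) in U by lra.
  replace ((12131 / 10000 - 1) / (1 + 12131 / 10000)) with (2131 / 22131) in L by field.
  replace ((4853 / 4000 - 1) / (1 + 4853 / 4000)) with (853 / 8853) in U by field.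
  assert (A1 := atan_lo (2131 / 22131) 1 ltac:(lra)).
  assert (A2 := atan_hi (853 / 8853) 1 ltac:(lra)).
  atan_fact A1. atan_fact A2.
  apply Rabs_le.
  assert (E : 1 - 2 * atan a / PI - 439 / 1000 = (561 / 1000 * PI - 2 * atan a) / PI) by (field; lra).
  rewrite E. split.
  - apply Rmult_le_reg_r with PI. lra.
    replace ((561 / 1000 * PI - 2 * atan a) / PI * PI) with (561 / 1000 * PI - 2 * atan a) by (field; lra). lra.
  - apply Rmult_le_reg_r with PI. lra.
    replace ((561 / 1000 * PI - 2 * atan a) / PI * PI) with (561 / 1000 * PI - 2 * atan a) by (field; lra). lra.
Qed.

Lemma root_exists : exists r, 12131 / 10000 <= r <= 4853 / 4000 /\ kf r = 0.
Proof.
  destruct (IVT (fun x => - kf x) (12131 / 10000) (4853 / 4000)) as [r [Hr1 Hr2]].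
  - intros x. apply continuity_pt_opp, kf_cont.
  - lra.
  - generalize kf_at_lo; lra.
  - generalize kf_at_hi; lra.
  - exists r. split; auto. lra.
Qed.

Lemma kf_sign r : 12131 / 10000 <= r <= 4853 / 4000 -> kf r = 0 ->
  (forall c, 0 < c < r -> 0 < kf c) /\ (forall c, r < c -> kf c < 0).
Proof.
  intros Hr Hk. split.
  - intros c Hc. rewrite <- Hk. apply kf_decr; lra.
  - intros c Hc. destruct (Rle_lt_dec c (7/5)).
    + rewrite <- Hk. apply kf_decr; lra.
    + apply kf_neg; lra.
Qed.

Lemma Hf_max r : 12131 / 10000 <= r <= 4853 / 4000 -> kf r = 0 ->
  forall a, 0 < a -> a <> r -> Hf a < Hf r.
Proof.
  intros Hr Hk a Ha Har.
  destruct (kf_sign r Hr Hk) as [S1 S2].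
  assert (HP := PI_RGT_0).
  destruct (Rlt_le_dec a r) as [h|h].
  - destruct (MVT_cor2 Hf (fun x => x / PI * kf x) a r h) as [c [Hc Hc2]].
    + intros c _. apply is_derive_Reals, Hf_derive.
    + assert (0 < kf c) by (apply S1; lra).
      assert (0 < c / PI) by (apply Rdiv_lt_0_compat; lra).
      assert (0 < c / PI * kf c) by (apply Rmult_lt_0_compat; lra).
      nra.
  - assert (h' : r < a) by (destruct h; [auto| congruence]).
    destruct (MVT_cor2 Hf (fun x => x / PI * kf x) r a h') as [c [Hc Hc2]].
    + intros c _. apply is_derive_Reals, Hf_derive.
    + assert (kf c < 0) by (apply S2; lra).
      assert (0 < c / PI) by (apply Rdiv_lt_0_compat; lra).
      assert (c / PI * kf c < 0) by (apply Rmult_pos_neg; lra).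
      nra.
Qed.

Lemma g_formula I c xi l : 0 < I -> 0 < xi -> 0 < c -> 0 < l ->
  g_speed I c xi l = 16 * c / (xi * sqrt (c * I)) ^ 2 * Hf (l * xi * sqrt (c * I) / 2).
Proof.
  intros hI hxi hc hl.
  assert (hs : 0 < sqrt (c * I)) by (apply sqrt_lt_R0; nra).
  set (s := sqrt (c * I)) in *.
  set (a := l * xi * s / 2).
  assert (ha : 0 < a) by (unfold a; assert (0 < l * xi) by nra; nra).
  unfold g_speed. fold s.
  rewrite (int2 a).
  - unfold Hf, a. field. generalize PI_RGT_0; intros.
    split; [|split; [|split]]; try lra. nra.
  - exact ha.
  - intros u. f_equal. f_equal. f_equal. unfold a. field.
Qed.

Lemma acc_formula I c xi l : 0 < I -> 0 < xi -> 0 < c -> 0 < l ->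
  accept_rate I c xi l = 1 - 2 * atan (l * xi * sqrt (c * I) / 2) / PI.
Proof.
  intros hI hxi hc hl.
  assert (hs : 0 < sqrt (c * I)) by (apply sqrt_lt_R0; nra).
  set (s := sqrt (c * I)) in *.
  set (a := l * xi * s / 2).
  assert (ha : 0 < a) by (unfold a; assert (0 < l * xi) by nra; nra).
  unfold accept_rate. fold s.
  rewrite (int1 a).
  - field. generalize PI_RGT_0; lra.
  - exact ha.
  - intros u. f_equal. f_equal. unfold a. field.
Qed.

Theorem corollary4 (I xi c : R) (hI : 0 < I) (hxi : 0 < xi) (hc0 : 0 < c) (hc1 : c <= 1) :
  exists l_opt : R,
    0 < l_opt /\
    (forall l : R, 0 < l -> l <> l_opt -> g_speed I c xi l < g_speed I c xi l_opt) /\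
    (exists K : R, Rabs (K - 2426 / 1000) <= 5 / 10000 /\ l_opt = K / (xi * sqrt (c * I))) /\
    Rabs (accept_rate I c xi l_opt - 439 / 1000) <= 5 / 10000.
Proof.
  destruct root_exists as [r [Hr Hk]].
  assert (hs : 0 < sqrt (c * I)) by (apply sqrt_lt_R0; nra).
  set (s := sqrt (c * I)) in *.
  assert (hxs : 0 < xi * s) by nra.
  exists (2 * r / (xi * s)).
  assert (hl : 0 < 2 * r / (xi * s)) by (apply Rdiv_lt_0_compat; lra).
  assert (ar : 2 * r / (xi * s) * xi * s / 2 = r) by (field; lra).
  split; [exact hl|split; [|split]].
  - intros l Hl Hne.
    rewrite !g_formula by lra. fold s. rewrite ar.
    assert (0 < 16 * c / (xi * s) ^ 2).
    { apply Rdiv_lt_0_compat. lra. apply pow_lt; lra. }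
    apply Rmult_lt_compat_l; auto.
    apply Hf_max; auto.
    + apply Rdiv_lt_0_compat; [repeat apply Rmult_lt_0_compat|]; lra.
    + intros e. apply Hne. rewrite <- e. field. lra.
  - exists (2 * r). split.
    + apply Rabs_le. lra.
    + reflexivity.
  - rewrite acc_formula by lra. fold s. rewrite ar.
    apply acc_bound; auto.
Qed.
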